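(* Let $n\ge2$, $\kappa\ge1$ and $G\in\mathcal G_{[n;\kappa]}$ with payoff structure vectors $V_1^c,\dots,V_n^c$. Then $G$ is skew-symmetric if and only if $$V_i^c=\mathrm{sgn}(\sigma)\,V_{\sigma(i)}^c\,T_\sigma\quad\text{for all }\sigma\in\mathbf S_n\text{ and }i=1,\dots,n,$$ where $T_\sigma=\Phi_{\sigma^{-1}(1)}*\Phi_{\sigma^{-1}(2)}*\cdots*\Phi_{\sigma^{-1}(n)}$.
   Context: $\delta_\kappa^j$ is the $j$-th column of $I_\kappa$, $\mathbf 1_m$ is the all-ones column vector of length $m$. For $i=1,\dots,n$ let $\Phi_i=\mathbf 1_{\kappa^{i-1}}^T\otimes I_\kappa\otimes\mathbf 1_{\kappa^{n-i}}^T\in\mathbb R^{\kappa\times\kappa^n}$, so that $\Phi_i(x_1\otimes\cdots\otimes x_n)=x_i$ for $x_j\in\{\delta_\kappa^1,\dots,\delta_\kappa^\kappa\}$. The Khatri–Rao product of $A\in\mathbb R^{p\times m}$ and $B\in\mathbb R^{q\times m}$ is $A*B=[\mathrm{Col}_1(A)\otimes\mathrm{Col}_1(B),\dots,\mathrm{Col}_m(A)\otimes\mathrm{Col}_m(B)]\in\mathbb R^{pq\times m}$ (iterated left to right). A finite game $G\in\mathcal G_{[n;\kappa]}$ has players $\{1,\dots,n\}$, each with strategy set $\{1,\dots,\kappa\}$, strategy $j$ identified with $\delta_\kappa^j$, and payoffs $c_i$; $V_i^c\in\mathbb R^{\kappa^n}$ is the unique row vector with $c_i(x_1,\dots,x_n)=V_i^c(x_1\otimes\cdots\otimes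 x_n)$ for all $x_j\in\{\delta_\kappa^1,\dots,\delta_\kappa^\kappa\}$. $\mathbf S_n$ is the symmetric group. $G$ is skew-symmetric if for every $\sigma\in\mathbf S_n$, every $i$ and every profile, $c_i(x_1,\dots,x_n)=\mathrm{sgn}(\sigma)\,c_{\sigma(i)}(x_{\sigma^{-1}(1)},\dots,x_{\sigma^{-1}(n)})$. *)

(* Defs.v *)
From HB Require Import structures.
From mathcomp Require Import all_boot all_order all_algebra all_fingroup.
From mathcomp Require Import mxtens.
Set Implicit Arguments. Unset Strict Implicit. Unset Printing Implicit Defensive.
Import Order.TTheory GRing.Theory Num.Theory.
Local Open Scope ring_scope.

(* Kronecker product: mathcomp-real-closed's [tensmx] (A *t B), the standard
   Kronecker product: (A *t B) (i1*p + i2) (j1*q + j2) = A i1 j1 * B i2 j2. *)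

Section Defs.
Variable R : comPzRingType.

(* delta_k^j : the j-th column of I_k (strategies are 0-based: j : 'I_k). *)
Definition delta (k : nat) (j : 'I_k) : 'cV[R]_k := col j (1%:M : 'M[R]_k).

Definition ones (m : nat) : 'cV[R]_m := const_mx 1.

Definition khatri_rao (p q m : nat) (A : 'M[R]_(p, m)) (B : 'M[R]_(q, m))
  : 'M[R]_(p * q, m) :=
  \matrix_(r, j) (col j A *t col j B) r 0.

Fixpoint khatri_rao_iter (k m n : nat) : ('I_n -> 'M[R]_(k, m)) -> 'M[R]_(k ^ n, m) :=
  match n return ('I_n -> 'M[R]_(k, m)) -> 'M[R]_(k ^ n, m) with
  | 0 => fun _ => const_mx 1
  | n'.+1 => fun A =>
      castmx (esym (expnSr k n'), erefl m)
        (khatri_rao (khatri_rao_iter (fun i => A (widen_ord (leqnSn n') i))) (A ord_max))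
  end.

Fixpoint kron_iter (k n : nat) : ('I_n -> 'cV[R]_k) -> 'cV[R]_(k ^ n) :=
  match n return ('I_n -> 'cV[R]_k) -> 'cV[R]_(k ^ n) with
  | 0 => fun _ => const_mx 1
  | n'.+1 => fun x =>
      castmx (esym (expnSr k n'), muln1 1)
        (kron_iter (fun i => x (widen_ord (leqnSn n') i)) *t x ord_max)
  end.

Lemma Phi_dim_proof (k n : nat) (i : 'I_n) : (k ^ i * k * k ^ (n - i.+1) = k ^ n)%N.
Proof. by rewrite -expnSr -expnD subnKC. Qed.

(* Phi_i = 1_{k^(i)}^T (x) I_k (x) 1_{k^(n-1-i)}^T  (0-based index i : 'I_n,
   i.e. Phi_i here is Phi_{i+1} of the paper), a k x k^n matrix. *)
Definition Phi (k n : nat) (i : 'I_n) : 'M[R]_(k, k ^ n) :=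
  castmx (etrans (muln1 _) (mul1n k), Phi_dim_proof k i)
    (((ones (k ^ i))^T *t (1%:M : 'M[R]_k)) *t (ones (k ^ (n - i.+1)))^T).

Definition Tsigma (k n : nat) (s : 'S_n) : 'M[R]_(k ^ n, k ^ n) :=
  khatri_rao_iter (fun j : 'I_n => Phi k (s^-1%g j)).

Definition sgn (n : nat) (s : 'S_n) : R := (-1) ^+ odd_perm s.

(* A game in G_[n;k]: payoffs c i x, for player i and strategy profile
   x : 'I_n -> 'I_k (strategy j of a player identified with delta_k^j). *)
Definition profile_vec (k n : nat) (x : 'I_n -> 'I_k) : 'cV[R]_(k ^ n) :=
  kron_iter (fun j => delta (x j)).

Definition is_payoff_structure (k n : nat) (c : 'I_n -> ('I_n -> 'I_k) -> R)
  (V : 'I_n -> 'rV[R]_(k ^ n)) : Prop :=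
  forall (i : 'I_n) (x : 'I_n -> 'I_k), c i x = (V i *m profile_vec x) 0 0.

Definition skew_symmetric (k n : nat) (c : 'I_n -> ('I_n -> 'I_k) -> R) : Prop :=
  forall (s : 'S_n) (i : 'I_n) (x : 'I_n -> 'I_k),
    c i x = sgn s * c (s i) (fun j => x (s^-1%g j)).

End Defs.

(* Main.v *)
Require Import Defs.
From HB Require Import structures.
From mathcomp Require Import all_boot all_order all_algebra all_fingroup.
From mathcomp Require Import mxtens.
Set Implicit Arguments. Unset Strict Implicit. Unset Printing Implicit Defensive.
Import Order.TTheory GRing.Theory Num.Theory.

Definition dig (K n : nat) (j : 'I_n) (r : nat) : 'I_K.+1 :=
  inord ((r %/ K.+1 ^ (n - j.+1)) %% K.+1).

Lemma digS K n (j : 'I_n) r :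
  dig K (widen_ord (leqnSn n) j) r = dig K j (r %/ K.+1).
Proof.
apply: val_inj; rewrite /dig /= !inordK ?ltn_mod //.
rewrite -divnMA -expnS subSS; congr (_ %/ K.+1 ^ _ %% _).
by rewrite subnSK.
Qed.

Lemma digmax K n r : dig K (@ord_max n) r = inord (r %% K.+1).
Proof. by rewrite /dig /= subnn expn0 divn1. Qed.

Lemma dig_inj K n (r r' : nat) : (r < K.+1 ^ n)%N -> (r' < K.+1 ^ n)%N ->
  (forall j : 'I_n, dig K j r = dig K j r') -> r = r'.
Proof.
elim: n r r' => [|n IH] r r'.
  by rewrite expn0 !ltnS !leqn0 => /eqP-> /eqP->.
move=> hr hr' H.
rewrite (divn_eq r K.+1) (divn_eq r' K.+1).
have -> : (r %/ K.+1 = r' %/ K.+1)%N.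
  apply: IH; first by rewrite ltn_divLR // -expnSr.
    by rewrite ltn_divLR // -expnSr.
  by move=> j; rewrite -!digS H.
have := H ord_max; rewrite !digmax => /(congr1 val) /=.
by rewrite !inordK ?ltn_mod // => ->.
Qed.

Lemma dig_surj K n (x : 'I_n -> 'I_K.+1) :
  exists2 r, (r < K.+1 ^ n)%N & forall j, dig K j r = x j.
Proof.
elim: n x => [|n IH] x.
  by exists 0%N => // -[].
have [r0 hr0 H0] := IH (fun j => x (widen_ord (leqnSn n) j)).
exists (r0 * K.+1 + x ord_max)%N.
  by rewrite expnSr; exact: (@mxtens_index_proof _ _ (Ordinal hr0, x ord_max)).
move=> j; have [jn|] := ltnP j n.
  have -> : j = widen_ord (leqnSn n) (Ordinal jn) by apply: val_inj.
  by rewrite digS divnMDl // divn_small // addn0 H0.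
move=> jn; have -> : j = ord_max by apply: val_inj; apply/eqP; rewrite eqn_leq jn andbT -ltnS ltn_ord.
by rewrite digmax modnMDl modn_small // inord_val.
Qed.

Local Open Scope ring_scope.
Section M.
Variable R : comPzRingType.

Lemma kron_iterE K n (x : 'I_n -> 'cV[R]_K.+1) (r : 'I_(K.+1 ^ n)) (z : 'I_1) :
  kron_iter x r z = \prod_(j < n) x j (dig K j r) 0.
Proof.
elim: n x r z => [|n IH] x r z.
  by rewrite big_ord0 /= mxE.
rewrite /= castmxE (mxE _ _ (cast_ord _ r)) big_ord_recr /= IH.
congr (_ * _); try (by apply: eq_bigr => j _; rewrite digS).
rewrite digmax; congr (x _ _ _); apply: val_inj; by rewrite /= ?inordK ?ltn_mod ?ord1.
Qed.

Lemma khatri_rao_iterE K n m (A : 'I_n -> 'M[R]_(K.+1, m)) (r : 'I_(K.+1 ^ n)) (c : 'I_m) :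
  khatri_rao_iter A r c = \prod_(j < n) A j (dig K j r) c.
Proof.
elim: n A r c => [|n IH] A r c.
  by rewrite big_ord0 /= mxE.
rewrite /= castmxE /khatri_rao (mxE _ _ (cast_ord _ r)) (mxE _ _ (cast_ord _ r)) !mxE.
rewrite big_ord_recr /= IH ?cast_ord_id.
congr (_ * _); try (by apply: eq_bigr => j _; rewrite digS).
rewrite digmax; congr (A _ _ _); apply: val_inj; by rewrite /= ?inordK ?ltn_mod ?ord1.
Qed.

Lemma PhiE K n (i : 'I_n) (a : 'I_K.+1) (r : 'I_(K.+1 ^ n)) :
  Phi R K.+1 i a r = (a == dig K i r)%:R.
Proof.
rewrite /Phi castmxE (mxE _ _ (cast_ord _ a)) !mxE mulr1 mul1r.
congr (_ %:R); rewrite -val_eqE /= -[in RHS]val_eqE /= inordK ?ltn_mod //.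
by rewrite divn1 (modn_small (ltn_ord a)).
Qed.

Lemma prod_bool n (b : 'I_n -> bool) :
  \prod_(j < n) (b j)%:R = ([forall j, b j])%:R :> R.
Proof.
case: (boolP [forall j, b j]) => [/forallP h|/forallPn [j hj]].
  by rewrite big1 // => j _; rewrite h.
by rewrite (bigD1 j) //= (negbTE hj) mul0r.
Qed.

Lemma pvE K n (x : 'I_n -> 'I_K.+1) r z :
  profile_vec R x r z = \prod_j (dig K j r == x j)%:R.
Proof.
by rewrite /profile_vec kron_iterE; apply: eq_bigr => j _; rewrite /delta !mxE.
Qed.

Lemma pv_ext K n (x y : 'I_n -> 'I_K.+1) :
  (forall j, x j = y j) -> profile_vec R x = profile_vec R y.
Proof.
by move=> H; apply/matrixP => r z; rewrite !pvE; apply: eq_bigr => j _; rewrite H.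
Qed.

Lemma pv_dig K n (m : 'I_(K.+1 ^ n)) :
  profile_vec R (fun j => dig K j m) = delta R m.
Proof.
apply/matrixP => r z; rewrite pvE /delta !mxE prod_bool; congr ((nat_of_bool _)%:R).
apply/idP/idP => [/forallP h|/eqP ->]; last by apply/forallP.
apply/eqP; apply: val_inj; apply: (dig_inj (ltn_ord r) (ltn_ord m)) => j.
by apply/eqP: (h j).
Qed.

Lemma colT K n (s : 'S_n) (m : 'I_(K.+1 ^ n)) :
  col m (Tsigma R K.+1 s) = profile_vec R (fun j => dig K (s^-1%g j) m).
Proof.
apply/matrixP => r z; rewrite mxE /Tsigma khatri_rao_iterE pvE.
by apply: eq_bigr => j _; rewrite PhiE eq_sym.
Qed.

Lemma mul_delta N (u : 'rV[R]_N) (m : 'I_N) : (u *m delta R m) 0 0 = u 0 m.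
Proof.
rewrite mxE (bigD1 m) //= /delta !mxE eqxx mulr1 big1 ?addr0 // => r hr.
by rewrite !mxE (negbTE hr) mulr0.
Qed.

Lemma mul_col N M (u : 'rV[R]_N) (A : 'M[R]_(N, M)) (m : 'I_M) :
  (u *m col m A) 0 0 = (u *m A) 0 m.
Proof. by rewrite !mxE; apply: eq_bigr => r _; rewrite !mxE. Qed.

End M.

Theorem proposition3p15 (R : realFieldType) (n k : nat)
  (hn : (2 <= n)%N) (hk : (1 <= k)%N)
  (c : 'I_n -> ('I_n -> 'I_k) -> R) (V : 'I_n -> 'rV[R]_(k ^ n))
  (hV : is_payoff_structure c V) :
  skew_symmetric c <->
  (forall (s : 'S_n) (i : 'I_n), V i = sgn R s *: (V (s i) *m Tsigma R k s)).
Proof.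
case: k hk c V hV => [//|K] _ c V hV.
split.
- move=> H s i; apply/rowP => m.
  have e1 := hV i (fun j => dig K j m).
  rewrite pv_dig mul_delta in e1.
  rewrite -e1 (H s i) hV [in RHS]mxE; congr (_ * _).
  by rewrite -colT mul_col.
- move=> H s i x.
  have [m hm hx] := dig_surj x.
  pose mo := Ordinal hm.
  have px : profile_vec R x = delta R mo.
    by rewrite -pv_dig; apply: pv_ext => j; rewrite hx.
  have py : profile_vec R (fun j => x (s^-1%g j)) = col mo (Tsigma R K.+1 s).
    by rewrite colT; apply: pv_ext => j; rewrite hx.
  by rewrite !hV px py (H s i) -scalemxAl [LHS]mxE mul_delta mul_col.
Qed.
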